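(* Let $y_0\in E$ and suppose: (A1) $\eta>0$ on $[y_0,\infty)$ and $\eta\in C^2([y_0,\infty))$; (A2) $b^2/\eta$, $\tilde a/\eta$, $\eta'/\eta$ are bounded on $[y_0,\infty)$; (A3) $\Psi\eta(y)\to1$ as $y\to\infty$. Let $u$ be a solution of $0=\tfrac12b^2u''+\tilde au'+\eta u-u^2-d\frac{(u')^2}{u}$ on $[y_0,\infty)$ with $C_1\eta\le u\le C_2\eta$ there for some $0<C_1<C_2$. Assume that there are constants $K_1,K_2\neq0$ with $\frac{\tilde a}{\eta}+(b^2-2d)\frac{\eta'}{\eta^2}\to K_1$ and $\frac d\eta\to K_2$ as $y\to\infty$, and that $\eta'(y)/\eta(y)\to0$ as $y\to\infty$. Then $u'(y)/u(y)\to0$ as $y\to\infty$.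
   Context: $E=(E_-,\infty)$ with $E_-\in\{-\infty\}\cup\mathbb R$. $r,\lambda,\sigma,a,b,\rho,\delta:E\to\mathbb R$ are locally Lipschitz with $\sigma>0$, $b(y)\neq0$, $\rho(y)\in[-1,1]$; $R\in(0,\infty)\setminus\{1\}$. Define $\eta=\frac1R\big(\delta-(1-R)(r+\frac{\lambda^2}{2R})\big)$, $\tilde a=a+\frac{1-R}{R}\rho\lambda b$, $d=\frac12b^2((1-\rho^2)R+\rho^2+1)$, and for positive $g\in C^2$, $\Psi g=1+\frac{\frac12b^2g''+\tilde ag'}{g^2}-d\frac{(g')^2}{g^3}$. *)

(* Defs.v *)
From Stdlib Require Import Reals.
From Coquelicot Require Import Coquelicot.
Open Scope R_scope.

(* E = (E_-, +oo) with E_- in {-oo} ∪ R, encoded by Em : Rbar. *)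
Definition inE (Em : Rbar) (y : R) : Prop := Rbar_lt Em y.

Definition loc_lipschitz_on (D : R -> Prop) (f : R -> R) : Prop :=
  forall x, D x -> exists eps : R, 0 < eps /\ exists L : R,
    forall y z, D y -> D z -> Rabs (y - x) < eps -> Rabs (z - x) < eps ->
      Rabs (f y - f z) <= L * Rabs (y - z).

Definition eta_fn (Rr : R) (r lam delta : R -> R) (y : R) : R :=
  / Rr * (delta y - (1 - Rr) * (r y + lam y ^ 2 / (2 * Rr))).

Definition atilde_fn (Rr : R) (a rho lam b : R -> R) (y : R) : R :=
  a y + (1 - Rr) / Rr * rho y * lam y * b y.

Definition d_fn (Rr : R) (b rho : R -> R) (y : R) : R :=
  1 / 2 * b y ^ 2 * ((1 - rho y ^ 2) * Rr + rho y ^ 2 + 1).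

(* Psi g, where g1, g2 are (the functions) g' and g''. *)
Definition Psi (b at_ d : R -> R) (g g1 g2 : R -> R) (y : R) : R :=
  1 + (1 / 2 * b y ^ 2 * g2 y + at_ y * g1 y) / g y ^ 2
    - d y * g1 y ^ 2 / g y ^ 3.

Definition ray (y0 : R) : R -> Prop := fun y => y0 <= y.

Definition is_deriv_within (D : R -> Prop) (f : R -> R) (x l : R) : Prop :=
  filterlim (fun z => (f z - f x) / (z - x))
    (within (fun z => D z /\ z <> x) (locally x)) (locally l).

Definition cont_within (D : R -> Prop) (f : R -> R) (x : R) : Prop :=
  filterlim f (within D (locally x)) (locally (f x)).

Definition bounded_on (D : R -> Prop) (f : R -> R) : Prop :=
  exists M : R, forall y, D y -> Rabs (f y) <= M.

(* Main.v *)
Require Import Defs.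
From Stdlib Require Import Reals.
From Coquelicot Require Import Coquelicot.
From Stdlib Require Import Lra Classical.
Open Scope R_scope.

Lemma cont_of_deriv f x l : derivable_pt_lim f x l ->
  forall eps, 0 < eps -> exists del, 0 < del /\ forall z, Rabs (z - x) < del -> Rabs (f z - f x) < eps.
Proof.
  intros Hd eps He.
  pose proof (derivable_continuous_pt f x (exist _ l Hd)) as Hc.
  destruct (Hc eps He) as [alp [Ha H]].
  exists alp; split; [exact Ha|]. intros z Hz.
  destruct (Req_dec z x) as [->|Hne].
  - rewrite Rminus_eq_0, Rabs_R0; exact He.
  - apply (H z). split; [split; [exact I| congruence] | exact Hz].
Qed.

Lemma mvt_lb f df a t1 t2 c :
  (forall t, a < t -> derivable_pt_lim f t (df t)) -> a < t1 -> t1 <= t2 ->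
  (forall t, t1 <= t <= t2 -> c <= df t) -> f t1 + c * (t2 - t1) <= f t2.
Proof.
  intros Hd Ha Ht Hc.
  destruct (Req_dec t1 t2) as [<-|Hne]; [lra|].
  destruct (MVT_gen f t1 t2 df) as [c0 [Hc0 Heq]].
  - intros x Hx. rewrite Rmin_left in Hx by lra. rewrite Rmax_right in Hx by lra.
    apply is_derive_Reals, Hd; lra.
  - intros x Hx. rewrite Rmin_left in Hx by lra. rewrite Rmax_right in Hx by lra.
    apply (derivable_continuous_pt f x (exist _ (df x) (Hd x ltac:(lra)))).
  - rewrite Rmin_left in Hc0 by lra. rewrite Rmax_right in Hc0 by lra.
    specialize (Hc c0 Hc0). nra.
Qed.

Lemma LU f df a t1 c M :
  (forall t, a < t -> derivable_pt_lim f t (df t)) -> a < t1 -> 0 < c ->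
  (forall t, t1 <= t -> c <= df t) -> (forall t, t1 <= t -> f t <= M) -> False.
Proof.
  intros Hd Ha Hc Hdf HM.
  set (t2 := t1 + Rabs (M - f t1) / c + 1).
  assert (Ht2 : t1 <= t2).
  { unfold t2. assert (0 <= Rabs (M - f t1) / c) by (apply Rdiv_le_0_compat; [apply Rabs_pos|lra]). lra. }
  pose proof (mvt_lb f df a t1 t2 c Hd Ha Ht2 (fun t Ht => Hdf t (proj1 Ht))) as H.
  specialize (HM t2 Ht2).
  assert (E : c * (t2 - t1) = Rabs (M - f t1) + c) by (unfold t2; field; lra).
  pose proof (Rle_abs (M - f t1)). lra.
Qed.

Lemma BL f df a t0 L :
  (forall t, a < t -> derivable_pt_lim f t (df t)) -> a < t0 -> L <= f t0 ->
  (forall t, t0 <= t -> (forall s, t0 <= s <= t -> L <= f s) -> f t = L -> 0 < df t) ->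
  forall t, t0 <= t -> L <= f t.
Proof.
  intros Hd Ha H0 Hb t1 Ht1.
  destruct (Rle_or_lt L (f t1)) as [Hok|Hbad]; [exact Hok|exfalso].
  assert (Hlt : t0 < t1) by (destruct (Req_dec t0 t1) as [<-|]; lra).
  set (S := fun s => t0 <= s <= t1 /\ forall tau, t0 <= tau <= s -> L <= f tau).
  assert (HS0 : S t0) by (split; [lra| intros tau Htau; replace tau with t0 by lra; exact H0]).
  destruct (completeness S) as [m [Hub Hlub]].
  { exists t1. intros s Hs. apply Hs. }
  { exists t0; exact HS0. }
  assert (Hm0 : t0 <= m) by (apply Hub; exact HS0).
  assert (Hm1 : m <= t1) by (apply Hlub; intros s Hs; apply Hs).
  assert (K1 : forall tau, t0 <= tau < m -> L <= f tau).
  { intros tau Htau. destruct (Rle_or_lt L (f tau)) as [Hh|Hh]; [exact Hh|exfalso].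
    assert (m <= tau); [|lra].
    apply Hlub. intros s [Hs1 Hs2]. destruct (Rle_or_lt s tau) as [|Hst]; [assumption|].
    specialize (Hs2 tau ltac:(lra)). lra. }
  assert (K2 : L <= f m).
  { destruct (Rle_or_lt L (f m)) as [Hh|Hh]; [exact Hh|exfalso].
    destruct (Req_dec m t0) as [->|Hne]; [lra|].
    destruct (cont_of_deriv f m (df m) (Hd m ltac:(lra)) (L - f m) ltac:(lra)) as [del [Hdel Hc]].
    set (tau := Rmax t0 (m - del/2)).
    assert (Htau1 : t0 <= tau) by apply Rmax_l.
    assert (Htau2 : m - del/2 <= tau) by apply Rmax_r.
    assert (Htau3 : tau < m) by (unfold tau; apply Rmax_lub_lt; lra).
    specialize (K1 tau ltac:(lra)).
    specialize (Hc tau ltac:(rewrite Rabs_left by lra; lra)).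
    apply Rabs_lt_between in Hc. lra. }
  assert (HSm : forall tau, t0 <= tau <= m -> L <= f tau).
  { intros tau Htau. destruct (Req_dec tau m) as [->|]; [exact K2|]. apply K1; lra. }
  assert (Hmt1 : m < t1) by (destruct (Req_dec m t1) as [->|]; lra).
  assert (K3 : exists del, 0 < del /\ forall z, m <= z < m + del -> L <= f z).
  { destruct (Rle_or_lt (f m) L) as [Heq|Hgt].
    - assert (Heq' : f m = L) by lra.
      assert (Hpos : 0 < df m) by (apply Hb; [lra|exact HSm|exact Heq']).
      destruct (Hd m ltac:(lra) (df m / 2) ltac:(lra)) as [del Hdel].
      exists del; split; [apply cond_pos|].
      intros z Hz. destruct (Req_dec z m) as [->|Hne]; [lra|].
      assert (Hh : z - m <> 0) by lra.
      assert (Habs : Rabs (z - m) < del) by (rewrite Rabs_right by lra; lra).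
      specialize (Hdel (z - m) Hh Habs).
      replace (m + (z - m)) with z in Hdel by ring.
      apply Rabs_lt_between in Hdel.
      assert (Hq : 0 < (f z - f m) / (z - m)) by lra.
      assert (0 < f z - f m); [|lra].
      replace (f z - f m) with ((f z - f m) / (z - m) * (z - m)) by (field; lra).
      apply Rmult_lt_0_compat; lra.
    - destruct (cont_of_deriv f m (df m) (Hd m ltac:(lra)) (f m - L) ltac:(lra)) as [del [Hdel Hc]].
      exists del; split; [exact Hdel|]. intros z Hz.
      specialize (Hc z ltac:(rewrite Rabs_right by lra; lra)).
      apply Rabs_lt_between in Hc. lra. }
  destruct K3 as [del [Hdel K3]].
  set (s' := Rmin (m + del/2) t1).
  assert (Hs'1 : s' <= t1) by apply Rmin_r.
  assert (Hs'2 : s' <= m + del/2) by apply Rmin_l.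
  assert (Hs'3 : m < s') by (unfold s'; apply Rmin_glb_lt; lra).
  assert (S s').
  { split; [lra|]. intros tau Htau. destruct (Rle_or_lt tau m).
    - apply HSm; lra.
    - apply K3; lra. }
  specialize (Hub s' H). lra.
Qed.

Lemma BLneg f df a t0 L :
  (forall t, a < t -> derivable_pt_lim f t (df t)) -> a < t0 -> f t0 <= L ->
  (forall t, t0 <= t -> (forall s, t0 <= s <= t -> f s <= L) -> f t = L -> df t < 0) ->
  forall t, t0 <= t -> f t <= L.
Proof.
  intros Hd Ha H0 Hb t Ht.
  assert (-L <= - f t); [|lra].
  apply (BL (fun x => - f x) (fun x => - df x) a t0 (-L)); try lra.
  - intros x Hx. apply derivable_pt_lim_opp, Hd, Hx.
  - intros x Hx Hs Heq. assert (df x < 0); [|lra].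
    apply Hb; [lra| |lra]. intros s Hs'. specialize (Hs s Hs'). lra.
Qed.
Lemma quad_bound e k x Em Km s : Rabs e <= Em -> Rabs k <= Km -> Rabs x <= s -> s <= 1 ->
  - ((Em + Km) * s) <= e * x ^ 2 - k * x <= (Em + Km) * s.
Proof.
  intros He Hk Hx Hs.
  apply Rabs_le_between in He. apply Rabs_le_between in Hk. apply Rabs_le_between in Hx.
  assert (Hx2 : x ^ 2 <= s) by nra.
  assert (0 <= x^2) by nra.
  split; nra.
Qed.
Lemma AbsW (a : R) (f df v om Bi E K eps : R -> R) (c0 beta Em Km : R) :
  (forall t, a < t -> derivable_pt_lim f t (df t)) ->
  (forall t, a < t -> derivable_pt_lim v t (om t * f t)) ->
  (forall t, a < t -> 0 < om t) ->
  0 < beta -> (forall t, a < t -> beta <= Bi t) ->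
  (forall t, a < t -> df t = Bi t * (E t * f t ^ 2 - K t * f t + (v t - c0 - eps t))) ->
  (forall t, a < t -> Rabs (E t) <= Em) ->
  (forall t, a < t -> Rabs (K t) <= Km) ->
  (forall e, 0 < e -> exists T, forall t, T < t -> Rabs (eps t) < e) ->
  (forall s t1, 0 < s -> a < t1 -> ~ (forall t, t1 <= t -> s <= f t)) ->
  (forall s t1, 0 < s -> a < t1 -> ~ (forall t, t1 <= t -> f t <= - s)) ->
  forall delta, 0 < delta -> exists T, a < T /\ forall t, T <= t -> v t <= c0 + delta.
Proof.
  intros Hf Hv Hom Hbeta HBi Hdf HE HK Heps F1 F2 delta Hdelta.
  assert (HEm : 0 <= Em) by (pose proof (HE (a+1) ltac:(lra)); pose proof (Rabs_pos (E (a+1))); lra).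
  assert (HKm : 0 <= Km) by (pose proof (HK (a+1) ltac:(lra)); pose proof (Rabs_pos (K (a+1))); lra).
  destruct (Heps (delta/4) ltac:(lra)) as [T1 HT1].
  set (T0 := Rmax a T1 + 1).
  assert (HT0a : a < T0) by (unfold T0; pose proof (Rmax_l a T1); lra).
  assert (HT0e : forall t, T0 <= t -> Rabs (eps t) < delta/4).
  { intros t Ht. apply HT1. unfold T0 in Ht; pose proof (Rmax_r a T1); lra. }
  set (kap := delta/4).
  set (s0 := Rmin 1 (kap / (2 * (Em + Km + 1)))).
  assert (Hs0pos : 0 < s0).
  { unfold s0. apply Rmin_glb_lt; [lra|]. unfold kap. apply Rdiv_lt_0_compat; lra. }
  assert (Hs01 : s0 <= 1) by apply Rmin_l.
  assert (Hs0k : (Em + Km) * s0 <= kap / 2).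
  { assert (s0 <= kap / (2 * (Em + Km + 1))) by apply Rmin_r.
    assert (H2 : (Em + Km + 1) * s0 <= kap / 2).
    { replace (kap/2) with ((Em+Km+1) * (kap / (2 * (Em + Km + 1)))) by (field; lra).
      apply Rmult_le_compat_l; lra. }
    nra. }
  assert (Hq : forall t, T0 <= t -> Rabs (f t) <= s0 ->
            - (kap/2) <= E t * f t ^ 2 - K t * f t <= kap / 2).
  { intros t Ht Hft. pose proof (quad_bound (E t) (K t) (f t) Em Km s0 (HE t ltac:(lra)) (HK t ltac:(lra)) Hft Hs01). lra. }
  assert (Hdfpos : forall t, T0 <= t -> Rabs (f t) <= s0 -> kap <= v t - c0 - eps t -> beta * (kap/2) <= df t).
  { intros t Ht Hft Hg. rewrite (Hdf t ltac:(lra)). specialize (Hq t Ht Hft).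
    specialize (HBi t ltac:(lra)). unfold kap in *. nra. }
  assert (Claim : forall z, T0 <= z -> c0 + delta/2 < v z -> f z < 0).
  { intros z Hz Hvz. destruct (Rlt_or_le (f z) 0) as [Hneg|Hnn]; [exact Hneg|exfalso].
    assert (Hvmono : forall t, z <= t -> (forall s, z <= s <= t -> 0 <= f s) -> v z <= v t).
    { intros t Ht Hs. pose proof (mvt_lb v (fun x => om x * f x) a z t 0 Hv ltac:(lra) Ht) as H.
      assert (v z + 0 * (t - z) <= v t); [|lra]. apply H. intros s Hs'.
      specialize (Hs s Hs'). specialize (Hom s ltac:(lra)). nra. }
    assert (Hqp : forall t, z <= t -> 0 <= f t).
    { apply (BL f df a z 0 Hf ltac:(lra) Hnn).
      intros t Ht Hs Ht0. rewrite (Hdf t ltac:(lra)), Ht0.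
      specialize (Hvmono t Ht Hs). specialize (HT0e t ltac:(lra)). apply Rabs_lt_between in HT0e.
      specialize (HBi t ltac:(lra)). nra. }
    assert (Hg : forall t, z <= t -> kap <= v t - c0 - eps t).
    { intros t Ht. pose proof (Hvmono t Ht (fun s Hs => Hqp s ltac:(lra))).
      specialize (HT0e t ltac:(lra)). apply Rabs_lt_between in HT0e. unfold kap; lra. }
    destruct (classic (exists t1, z <= t1 /\ s0 <= f t1)) as [[t1 [Ht1 Hft1]]|Hno].
    - apply (F1 s0 t1 Hs0pos ltac:(lra)).
      apply (BL f df a t1 s0 Hf ltac:(lra) Hft1).
      intros t Ht Hs Hft. assert (0 < beta * (kap/2) <= df t); [|lra]. split.
      + unfold kap; nra.
      + apply Hdfpos; [lra| |apply Hg; lra]. rewrite Hft, Rabs_right; lra.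
    - apply (LU f df a z (beta * (kap/2)) s0 Hf ltac:(lra)).
      + unfold kap; nra.
      + intros t Ht. apply Hdfpos; [lra| |apply Hg; lra].
        assert (f t < s0) by (apply Rnot_le_lt; intro; apply Hno; exists t; split; lra).
        specialize (Hqp t Ht). rewrite Rabs_right; lra.
      + intros t Ht. assert (f t < s0) by (apply Rnot_le_lt; intro; apply Hno; exists t; split; lra). lra. }
  destruct (classic (exists t1, T0 <= t1 /\ v t1 <= c0 + delta)) as [[t1 [Ht1 Hvt1]]|Hno].
  - exists t1. split; [lra|].
    apply (BLneg v (fun x => om x * f x) a t1 (c0 + delta) Hv ltac:(lra) Hvt1).
    intros t Ht _ Hvt. specialize (Claim t ltac:(lra) ltac:(lra)). specialize (Hom t ltac:(lra)). nra.
  - exfalso.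
    assert (Hvb : forall t, T0 <= t -> c0 + delta < v t).
    { intros t Ht. apply Rnot_le_lt. intro. apply Hno. exists t; split; lra. }
    assert (Hfn : forall t, T0 <= t -> f t < 0) by (intros t Ht; apply Claim; [lra| specialize (Hvb t Ht); lra]).
    assert (Hg : forall t, T0 <= t -> kap <= v t - c0 - eps t).
    { intros t Ht. specialize (Hvb t Ht). specialize (HT0e t Ht). apply Rabs_lt_between in HT0e. unfold kap; lra. }
    destruct (classic (exists t1, T0 <= t1 /\ - s0 <= f t1)) as [[t1 [Ht1 Hft1]]|Hno2].
    + assert (Hlow : forall t, t1 <= t -> - s0 <= f t).
      { apply (BL f df a t1 (-s0) Hf ltac:(lra) Hft1).
        intros t Ht Hs Hft. assert (0 < beta * (kap/2) <= df t); [|lra]. split.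
        * unfold kap; nra.
        * apply Hdfpos; [lra| |apply Hg; lra]. rewrite Hft, Rabs_left; [lra|]. lra. }
      apply (LU f df a t1 (beta * (kap/2)) 0 Hf ltac:(lra)).
      * unfold kap; nra.
      * intros t Ht. apply Hdfpos; [lra| |apply Hg; lra].
        specialize (Hlow t Ht). specialize (Hfn t ltac:(lra)). rewrite Rabs_left; lra.
      * intros t Ht. specialize (Hfn t ltac:(lra)). lra.
    + apply (F2 s0 T0 Hs0pos HT0a). intros t Ht. apply Rlt_le, Rnot_le_lt. intro. apply Hno2. exists t; split; lra.
Qed.
Lemma AbsQ (a : R) (f df Bi E K G : R -> R) (Em K1 : R) :
  (forall t, a < t -> derivable_pt_lim f t (df t)) ->
  (forall t, a < t -> 0 < Bi t) ->
  (forall t, a < t -> df t = Bi t * (E t * f t ^ 2 - K t * f t + G t)) ->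
  (forall t, a < t -> Rabs (E t) <= Em) ->
  (forall e, 0 < e -> exists T, forall t, T < t -> Rabs (K t - K1) < e) ->
  (forall e, 0 < e -> exists T, forall t, T < t -> Rabs (G t) < e) ->
  K1 <> 0 ->
  (forall s t1, 0 < s -> a < t1 -> ~ (forall t, t1 <= t -> s <= f t)) ->
  (forall s t1, 0 < s -> a < t1 -> ~ (forall t, t1 <= t -> f t <= - s)) ->
  forall s, 0 < s -> exists T, forall t, T < t -> Rabs (f t) < s.
Proof.
  intros Hf HBi Hdf HE HK HG HK1 F1 F2 s Hs.
  assert (HEm : 0 <= Em) by (pose proof (HE (a+1) ltac:(lra)); pose proof (Rabs_pos (E (a+1))); lra).
  set (A := Rabs K1).
  assert (HA : 0 < A) by (apply Rabs_pos_lt; exact HK1).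
  set (s' := Rmin (s/2) (A / (4 * (Em + 1)))).
  assert (Hs'pos : 0 < s') by (apply Rmin_glb_lt; [lra| apply Rdiv_lt_0_compat; lra]).
  assert (Hs's : s' <= s/2) by apply Rmin_l.
  assert (HEs : Em * s' <= A / 4).
  { assert (s' <= A / (4 * (Em + 1))) by apply Rmin_r.
    assert ((Em + 1) * s' <= A / 4); [|nra].
    replace (A/4) with ((Em+1) * (A / (4 * (Em + 1)))) by (field; lra).
    apply Rmult_le_compat_l; lra. }
  set (g := A * s' / 8).
  assert (Hg : 0 < g) by (unfold g; apply Rdiv_lt_0_compat; [nra|lra]).
  destruct (HK (A/2) ltac:(lra)) as [TK HTK].
  destruct (HG g Hg) as [TG HTG].
  set (T0 := Rmax a (Rmax TK TG) + 1).
  assert (HT0 : a < T0 /\ TK < T0 /\ TG < T0).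
  { unfold T0. pose proof (Rmax_l a (Rmax TK TG)). pose proof (Rmax_r a (Rmax TK TG)).
    pose proof (Rmax_l TK TG). pose proof (Rmax_r TK TG). lra. }
  assert (Hedge : forall t, T0 <= t ->
     - (A * s' / 4) <= E t * s' ^ 2 <= A * s' / 4 /\ Rabs (K t - K1) < A/2 /\ Rabs (G t) < g /\ 0 < Bi t).
  { intros t Ht. specialize (HE t ltac:(lra)). apply Rabs_le_between in HE.
    repeat split.
    - nra.
    - nra.
    - apply HTK; lra.
    - apply HTG; lra.
    - apply HBi; lra. }
  destruct (Rlt_or_le 0 K1) as [Kp|Kn].
  - assert (EA : A = K1) by (unfold A; rewrite Rabs_right; lra).
    assert (Htop : forall t, T0 <= t -> f t = s' -> df t < 0).
    { intros t Ht Hft. destruct (Hedge t Ht) as [[H1 H2] [H3 [H4 H5]]].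
      apply Rabs_lt_between in H3. apply Rabs_lt_between in H4.
      rewrite (Hdf t ltac:(lra)), Hft. unfold g in *. rewrite EA in *.
      assert (E t * s' ^ 2 - K t * s' + G t < 0) by nra. nra. }
    assert (Hbot : forall t, T0 <= t -> f t = - s' -> 0 < df t).
    { intros t Ht Hft. destruct (Hedge t Ht) as [[H1 H2] [H3 [H4 H5]]].
      apply Rabs_lt_between in H3. apply Rabs_lt_between in H4.
      rewrite (Hdf t ltac:(lra)), Hft. unfold g in *. rewrite EA in *.
      assert (0 < E t * (- s') ^ 2 - K t * (- s') + G t) by nra. nra. }
    destruct (classic (exists t1, T0 <= t1 /\ f t1 <= s')) as [[t1 [Ht1 Hft1]]|Hno].
    2:{ exfalso. apply (F1 s' T0 Hs'pos ltac:(lra)). intros t Ht.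
        apply Rlt_le, Rnot_le_lt. intro. apply Hno. exists t; split; lra. }
    assert (Hup : forall t, t1 <= t -> f t <= s').
    { apply (BLneg f df a t1 s' Hf ltac:(lra) Hft1). intros t Ht _ Hft. apply Htop; lra. }
    destruct (classic (exists t2, t1 <= t2 /\ - s' <= f t2)) as [[t2 [Ht2 Hft2]]|Hno].
    2:{ exfalso. apply (F2 s' t1 Hs'pos ltac:(lra)). intros t Ht.
        apply Rlt_le, Rnot_le_lt. intro. apply Hno. exists t; split; lra. }
    assert (Hlo : forall t, t2 <= t -> - s' <= f t).
    { apply (BL f df a t2 (-s') Hf ltac:(lra) Hft2). intros t Ht _ Hft. apply Hbot; lra. }
    exists t2. intros t Ht. specialize (Hup t ltac:(lra)). specialize (Hlo t ltac:(lra)).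
    apply Rabs_lt_between. lra.
  - assert (Kneg : K1 < 0) by (destruct Kn; [lra| congruence]).
    assert (EA : A = - K1) by (unfold A; rewrite Rabs_left; lra).
    assert (Htop : forall t, T0 <= t -> f t = s' -> 0 < df t).
    { intros t Ht Hft. destruct (Hedge t Ht) as [[H1 H2] [H3 [H4 H5]]].
      apply Rabs_lt_between in H3. apply Rabs_lt_between in H4.
      rewrite (Hdf t ltac:(lra)), Hft. unfold g in *. rewrite EA in *.
      assert (0 < E t * s' ^ 2 - K t * s' + G t) by nra. nra. }
    assert (Hbot : forall t, T0 <= t -> f t = - s' -> df t < 0).
    { intros t Ht Hft. destruct (Hedge t Ht) as [[H1 H2] [H3 [H4 H5]]].
      apply Rabs_lt_between in H3. apply Rabs_lt_between in H4.
      rewrite (Hdf t ltac:(lra)), Hft. unfold g in *. rewrite EA in *.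
      assert (E t * (- s') ^ 2 - K t * (- s') + G t < 0) by nra. nra. }
    exists T0. intros t Ht. apply Rabs_lt_between.
    destruct (Rle_or_lt (f t) s') as [Hu|Hu].
    + destruct (Rle_or_lt (- s') (f t)) as [Hl|Hl]; [lra|].
      exfalso. apply (F2 s' t Hs'pos ltac:(lra)).
      apply (BLneg f df a t (-s') Hf ltac:(lra) ltac:(lra)). intros x Hx _ Hfx. apply Hbot; lra.
    + exfalso. apply (F1 s' t Hs'pos ltac:(lra)).
      apply (BL f df a t s' Hf ltac:(lra) ltac:(lra)). intros x Hx _ Hfx. apply Htop; lra.
Qed.
Lemma lim_to_eps f l : is_lim f p_infty (Finite l) ->
  forall e, 0 < e -> exists T, forall t, T < t -> Rabs (f t - l) < e.
Proof.
  intros H e He. apply is_lim_spec in H. destruct (H (mkposreal e He)) as [M HM].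
  exists M. intros t Ht. apply (HM t Ht).
Qed.

Lemma eps_to_lim f l : (forall e, 0 < e -> exists T, forall t, T < t -> Rabs (f t - l) < e) ->
  is_lim f p_infty (Finite l).
Proof.
  intros H. apply is_lim_spec. intros [e He]. destruct (H e He) as [M HM].
  exists M. intros t Ht. apply (HM t Ht).
Qed.

Lemma within_to_lim y0 f x l : y0 < x -> is_deriv_within (ray y0) f x l -> derivable_pt_lim f x l.
Proof.
  intros Hx H eps Heps.
  unfold is_deriv_within in H. rewrite filterlim_locally in H. destruct (H (mkposreal eps Heps)) as [e He].
  assert (Hd : 0 < Rmin e (x - y0)) by (apply Rmin_glb_lt; [apply cond_pos|lra]).
  exists (mkposreal _ Hd). intros h Hh Hhd. simpl in Hhd.
  assert (Hh1 : Rabs h < e) by (pose proof (Rmin_l e (x - y0)); lra).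
  assert (Hh2 : Rabs h < x - y0) by (pose proof (Rmin_r e (x - y0)); lra).
  assert (B : ball x e (x + h)) by (change (Rabs (x + h - x) < e); replace (x + h - x) with h by ring; exact Hh1).
  specialize (He (x + h) B).
  assert (P : ray y0 (x + h) /\ x + h <> x).
  { split. - unfold ray. apply Rabs_lt_between in Hh2. lra. - intro C. apply Hh. lra. }
  specialize (He P). change (Rabs ((f (x + h) - f x) / (x + h - x) - l) < eps) in He.
  replace (x + h - x) with h in He by ring. exact He.
Qed.

Lemma dopp f x l : derivable_pt_lim f x l -> derivable_pt_lim (fun t => - f t) x (- l).
Proof. intro H. exact (derivable_pt_lim_opp f x l H). Qed.

Lemma dval f x l l' : l = l' -> derivable_pt_lim f x l -> derivable_pt_lim f x l'.
Proof. intros ->; auto. Qed.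

Lemma ddiv f g x df dg : derivable_pt_lim f x df -> derivable_pt_lim g x dg -> g x <> 0 ->
  derivable_pt_lim (fun t => f t / g t) x ((df * g x - f x * dg) / g x ^ 2).
Proof.
  intros Hf Hg Hne. apply is_derive_Reals. apply is_derive_div; try apply is_derive_Reals; auto.
Qed.

Lemma dminus f g x df dg : derivable_pt_lim f x df -> derivable_pt_lim g x dg ->
  derivable_pt_lim (fun t => f t - g t) x (df - dg).
Proof. intros Hf Hg. exact (derivable_pt_lim_minus f g x df dg Hf Hg). Qed.

Theorem corollary4p12
  (Em : Rbar) (r lam sigma a b rho delta : R -> R) (Rr : R) (y0 : R)
  (eta1 eta2 u u1 u2 : R -> R) (C1 C2 K1 K2 : R) :
  (* standing assumptions *)
  loc_lipschitz_on (inE Em) r -> loc_lipschitz_on (inE Em) lam ->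
  loc_lipschitz_on (inE Em) sigma -> loc_lipschitz_on (inE Em) a ->
  loc_lipschitz_on (inE Em) b -> loc_lipschitz_on (inE Em) rho ->
  loc_lipschitz_on (inE Em) delta ->
  (forall y, inE Em y -> 0 < sigma y) ->
  (forall y, inE Em y -> b y <> 0) ->
  (forall y, inE Em y -> -1 <= rho y <= 1) ->
  0 < Rr -> Rr <> 1 ->
  inE Em y0 ->
  let eta := eta_fn Rr r lam delta in
  let at_ := atilde_fn Rr a rho lam b in
  let d := d_fn Rr b rho in
  (* (A1): eta > 0 and eta in C^2([y0,oo)) with eta' = eta1, eta'' = eta2 *)
  (forall y, y0 <= y -> 0 < eta y) ->
  (forall y, y0 <= y ->
     is_deriv_within (ray y0) eta y (eta1 y) /\
     is_deriv_within (ray y0) eta1 y (eta2 y) /\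
     cont_within (ray y0) eta2 y) ->
  (* (A2) *)
  bounded_on (ray y0) (fun y => b y ^ 2 / eta y) ->
  bounded_on (ray y0) (fun y => at_ y / eta y) ->
  bounded_on (ray y0) (fun y => eta1 y / eta y) ->
  (* (A3) *)
  is_lim (Psi b at_ d eta eta1 eta2) p_infty (Finite 1) ->
  (* u is a solution on [y0,oo) with u' = u1, u'' = u2 *)
  (forall y, y0 <= y ->
     is_deriv_within (ray y0) u y (u1 y) /\
     is_deriv_within (ray y0) u1 y (u2 y)) ->
  (forall y, y0 <= y ->
     0 = 1 / 2 * b y ^ 2 * u2 y + at_ y * u1 y + eta y * u y - u y ^ 2
         - d y * u1 y ^ 2 / u y) ->
  0 < C1 -> C1 < C2 ->
  (forall y, y0 <= y -> C1 * eta y <= u y <= C2 * eta y) ->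
  K1 <> 0 -> K2 <> 0 ->
  is_lim (fun y => at_ y / eta y + (b y ^ 2 - 2 * d y) * eta1 y / eta y ^ 2)
    p_infty (Finite K1) ->
  is_lim (fun y => d y / eta y) p_infty (Finite K2) ->
  is_lim (fun y => eta1 y / eta y) p_infty (Finite 0) ->
  is_lim (fun y => u1 y / u y) p_infty (Finite 0).
Proof.
  intros _ _ _ _ _ _ _ _ Hb _ _ _ Hy0 eta at_ d
    Heta Hetad HB _ _ HPsi Hud Hode HC1 HC12 Hu HK1 _ HKlim HDlim Hhlim.
  assert (Hbt : forall t, y0 <= t -> b t <> 0).
  { intros t Ht. apply Hb. unfold inE in *. destruct Em; simpl in *; auto; lra. }
  clear Hb Hy0. clearbody eta at_ d.
  destruct HB as [MB HMB].
  assert (Du : forall t, y0 < t -> derivable_pt_lim u t (u1 t))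
    by (intros t Ht; apply (within_to_lim y0); [lra| apply (Hud t ltac:(lra))]).
  assert (Du1 : forall t, y0 < t -> derivable_pt_lim u1 t (u2 t))
    by (intros t Ht; apply (within_to_lim y0); [lra| apply (Hud t ltac:(lra))]).
  assert (De : forall t, y0 < t -> derivable_pt_lim eta t (eta1 t))
    by (intros t Ht; apply (within_to_lim y0); [lra| apply (Hetad t ltac:(lra))]).
  assert (De1 : forall t, y0 < t -> derivable_pt_lim eta1 t (eta2 t))
    by (intros t Ht; apply (within_to_lim y0); [lra| apply (Hetad t ltac:(lra))]).
  assert (Hup : forall t, y0 <= t -> 0 < u t)
    by (intros t Ht; specialize (Hu t Ht); specialize (Heta t Ht); nra).
  set (q := fun t => u1 t / u t - eta1 t / eta t).
  set (dq := fun t => (u2 t * u t - u1 t * u1 t) / u t ^ 2 - (eta2 t * eta t - eta1 t * eta1 t) / eta t ^ 2).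
  assert (Dq : forall t, y0 < t -> derivable_pt_lim q t (dq t)).
  { intros t Ht. unfold q, dq.
    apply (dminus (fun t => u1 t / u t) (fun t => eta1 t / eta t)).
    - apply ddiv; [apply Du1; lra | apply Du; lra | specialize (Hup t ltac:(lra)); lra].
    - apply ddiv; [apply De1; lra | apply De; lra | specialize (Heta t ltac:(lra)); lra]. }
  set (w := fun t => u t / eta t).
  assert (Dw : forall t, y0 < t -> derivable_pt_lim w t (w t * q t)).
  { intros t Ht. specialize (Hup t ltac:(lra)). specialize (Heta t ltac:(lra)).
    eapply dval; [| apply ddiv; [apply Du; lra | apply De; lra | lra]].
    unfold w, q. field; lra. }
  assert (Hwb : forall t, y0 <= t -> C1 <= w t <= C2).
  { intros t Ht. specialize (Hu t Ht). specialize (Heta t Ht).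
    assert (E : u t = w t * eta t) by (unfold w; field; lra). rewrite E in Hu. nra. }
  set (Bi := fun t => 2 * eta t / b t ^ 2).
  set (E := fun t => d t / eta t - b t ^ 2 / (2 * eta t)).
  set (K := fun y => at_ y / eta y + (b y ^ 2 - 2 * d y) * eta1 y / eta y ^ 2).
  set (eps := fun t => Psi b at_ d eta eta1 eta2 t - 1).
  assert (Key : forall t, y0 < t -> dq t = Bi t * (E t * q t ^ 2 - K t * q t + (w t - 1 - eps t))).
  { intros t Ht. specialize (Hode t ltac:(lra)). specialize (Hup t ltac:(lra)).
    specialize (Heta t ltac:(lra)). specialize (Hbt t ltac:(lra)).
    assert (Hu2 : u2 t = -(2 / b t ^ 2) * (at_ t * u1 t + eta t * u t - u t ^ 2 - d t * u1 t ^ 2 / u t)).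
    { apply (Rmult_eq_reg_l (1/2 * b t ^ 2)); [| apply Rmult_integral_contrapositive; split; [lra| apply pow_nonzero; exact Hbt]].
      replace (1 / 2 * b t ^ 2 * (-(2 / b t ^ 2) * (at_ t * u1 t + eta t * u t - u t ^ 2 - d t * u1 t ^ 2 / u t)))
        with (-(at_ t * u1 t + eta t * u t - u t ^ 2 - d t * u1 t ^ 2 / u t)) by (field; repeat split; try exact Hbt; lra).
      lra. }
    unfold dq, Bi, E, K, q, w, eps, Psi. rewrite Hu2. field. repeat split; try exact Hbt; lra. }

  assert (HMBpos : 0 < MB).
  { specialize (HMB y0 (Rle_refl y0)). specialize (Hbt y0 (Rle_refl y0)). specialize (Heta y0 (Rle_refl y0)).
    assert (0 < b y0 ^ 2 / eta y0) by (apply Rdiv_lt_0_compat; [apply pow2_gt_0; exact Hbt| lra]).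
    rewrite Rabs_right in HMB; lra. }
  set (beta := 2 / MB).
  assert (Hbeta : 0 < beta) by (unfold beta; apply Rdiv_lt_0_compat; lra).
  assert (HBi : forall t, y0 < t -> beta <= Bi t).
  { intros t Ht. specialize (HMB t ltac:(unfold ray; lra)). specialize (Hbt t ltac:(lra)).
    specialize (Heta t ltac:(lra)).
    assert (HBp : 0 < b t ^ 2 / eta t) by (apply Rdiv_lt_0_compat; [apply pow2_gt_0; exact Hbt| lra]).
    rewrite Rabs_right in HMB by lra.
    unfold beta, Bi. replace (2 * eta t / b t ^ 2) with (2 / (b t ^ 2 / eta t))
      by (field; split; [exact Hbt | lra]).
    unfold Rdiv. apply Rmult_le_compat_l; [lra|]. apply Rinv_le_contravar; lra. }
  assert (HBipos : forall t, y0 < t -> 0 < Bi t) by (intros t Ht; specialize (HBi t Ht); lra).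
  destruct (lim_to_eps _ _ HDlim 1 ltac:(lra)) as [TD HTD].
  destruct (lim_to_eps _ _ HKlim 1 ltac:(lra)) as [TK HTK].
  set (a0 := Rmax y0 (Rmax TD TK)).
  assert (Ha0 : y0 <= a0 /\ TD <= a0 /\ TK <= a0).
  { unfold a0. pose proof (Rmax_l y0 (Rmax TD TK)). pose proof (Rmax_r y0 (Rmax TD TK)).
    pose proof (Rmax_l TD TK). pose proof (Rmax_r TD TK). lra. }
  set (Emx := Rabs K2 + 1 + MB / 2).
  assert (HE : forall t, a0 < t -> Rabs (E t) <= Emx).
  { intros t Ht. specialize (HTD t ltac:(lra)). specialize (HMB t ltac:(unfold ray; lra)).
    specialize (Heta t ltac:(lra)).
    unfold E. replace (b t ^ 2 / (2 * eta t)) with ((b t ^ 2 / eta t) / 2) by (field; lra).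
    apply Rabs_le_between. apply Rabs_lt_between in HTD. apply Rabs_le_between in HMB.
    pose proof (Rle_abs K2). pose proof (Rle_abs (- K2)). rewrite Rabs_Ropp in *.
    unfold Emx. split; lra. }
  set (Kmx := Rabs K1 + 1).
  assert (HKb : forall t, a0 < t -> Rabs (K t) <= Kmx).
  { intros t Ht. specialize (HTK t ltac:(lra)). apply Rabs_lt_between in HTK.
    apply Rabs_le_between. pose proof (Rle_abs K1). pose proof (Rle_abs (- K1)). rewrite Rabs_Ropp in *.
    unfold Kmx, K. split; lra. }
  assert (Heps : forall e, 0 < e -> exists T, forall t, T < t -> Rabs (eps t) < e).
  { intros e He. destruct (lim_to_eps _ _ HPsi e He) as [T HT]. exists T. intros t Ht. apply (HT t Ht). }
  assert (F1 : forall s t1, 0 < s -> a0 < t1 -> ~ (forall t, t1 <= t -> s <= q t)).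
  { intros s t1 Hs Ht1 H.
    apply (LU w (fun t => w t * q t) a0 t1 (C1 * s) C2).
    - intros t Ht. apply Dw. lra.
    - lra.
    - nra.
    - intros t Ht. specialize (H t Ht). specialize (Hwb t ltac:(lra)). nra.
    - intros t Ht. apply (Hwb t ltac:(lra)). }
  assert (F2 : forall s t1, 0 < s -> a0 < t1 -> ~ (forall t, t1 <= t -> q t <= - s)).
  { intros s t1 Hs Ht1 H.
    apply (LU (fun t => - w t) (fun t => - (w t * q t)) a0 t1 (C1 * s) 0).
    - intros t Ht. apply dopp, Dw. lra.
    - lra.
    - nra.
    - intros t Ht. specialize (H t Ht). specialize (Hwb t ltac:(lra)). nra.
    - intros t Ht. specialize (Hwb t ltac:(lra)). lra. }
  assert (Wup : forall delta, 0 < delta -> exists T, a0 < T /\ forall t, T <= t -> w t <= 1 + delta).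
  { apply (AbsW a0 q dq w w Bi E K eps 1 beta Emx Kmx).
    - intros t Ht. apply Dq. lra.
    - intros t Ht. apply Dw. lra.
    - intros t Ht. specialize (Hwb t ltac:(lra)). lra.
    - exact Hbeta.
    - intros t Ht. apply HBi. lra.
    - intros t Ht. apply Key. lra.
    - exact HE.
    - exact HKb.
    - exact Heps.
    - exact F1.
    - exact F2. }
  assert (Wlo : forall delta, 0 < delta -> exists T, a0 < T /\ forall t, T <= t -> - w t <= -1 + delta).
  { apply (AbsW a0 (fun t => - q t) (fun t => - dq t) (fun t => - w t) w Bi (fun t => - E t) K
             (fun t => - eps t) (-1) beta Emx Kmx).
    - intros t Ht. apply dopp, Dq. lra.
    - intros t Ht. eapply dval; [| apply dopp, Dw; lra]. ring.
    - intros t Ht. specialize (Hwb t ltac:(lra)). lra.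
    - exact Hbeta.
    - intros t Ht. apply HBi. lra.
    - intros t Ht. rewrite (Key t ltac:(lra)). ring.
    - intros t Ht. rewrite Rabs_Ropp. apply HE, Ht.
    - exact HKb.
    - intros e He. destruct (Heps e He) as [T HT]. exists T. intros t Ht. rewrite Rabs_Ropp. apply HT, Ht.
    - intros s t1 Hs Ht1 H. apply (F2 s t1 Hs Ht1). intros t Ht. specialize (H t Ht). lra.
    - intros s t1 Hs Ht1 H. apply (F1 s t1 Hs Ht1). intros t Ht. specialize (H t Ht). lra. }
  assert (HG : forall e, 0 < e -> exists T, forall t, T < t -> Rabs ((fun t => w t - 1 - eps t) t) < e).
  { intros e He.
    destruct (Wup (e/3) ltac:(lra)) as [T1 [_ HT1]].
    destruct (Wlo (e/3) ltac:(lra)) as [T2 [_ HT2]].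
    destruct (Heps (e/3) ltac:(lra)) as [T3 HT3].
    exists (Rmax T1 (Rmax T2 T3)). intros t Ht.
    pose proof (Rmax_l T1 (Rmax T2 T3)). pose proof (Rmax_r T1 (Rmax T2 T3)).
    pose proof (Rmax_l T2 T3). pose proof (Rmax_r T2 T3).
    specialize (HT1 t ltac:(lra)). specialize (HT2 t ltac:(lra)). specialize (HT3 t ltac:(lra)).
    apply Rabs_lt_between in HT3. apply Rabs_lt_between. lra. }
  assert (Qlim : forall s, 0 < s -> exists T, forall t, T < t -> Rabs (q t) < s).
  { apply (AbsQ a0 q dq Bi E K (fun t => w t - 1 - eps t) Emx K1).
    - intros t Ht. apply Dq. lra.
    - intros t Ht. apply HBipos. lra.
    - intros t Ht. apply Key. lra.
    - exact HE.
    - intros e He. destruct (lim_to_eps _ _ HKlim e He) as [T HT]. exists T. exact HT.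
    - exact HG.
    - exact HK1.
    - exact F1.
    - exact F2. }
  apply eps_to_lim. intros e He.
  destruct (Qlim (e/2) ltac:(lra)) as [T1 HT1].
  destruct (lim_to_eps _ _ Hhlim (e/2) ltac:(lra)) as [T2 HT2].
  exists (Rmax y0 (Rmax T1 T2)). intros t Ht.
  pose proof (Rmax_l y0 (Rmax T1 T2)). pose proof (Rmax_r y0 (Rmax T1 T2)).
  pose proof (Rmax_l T1 T2). pose proof (Rmax_r T1 T2).
  specialize (HT1 t ltac:(lra)). specialize (HT2 t ltac:(lra)).
  unfold q in HT1. apply Rabs_lt_between in HT1. apply Rabs_lt_between in HT2.
  apply Rabs_lt_between. lra.
Qed.
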